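(* Let $T=(T,\mu,\iota)$ be a normal lax double monad on an equipment $\mathcal K$. For every vertical morphism $f\colon A\to C$ in $\mathcal K$, the cell $\iota_{f_*}$ (where $f_*\colon A\nrightarrow C$ is the companion of $f$) satisfies the right Beck–Chevalley condition.
   Context: Double categories: a double category has objects, vertical morphisms (composition $\circ$), horizontal morphisms $J\colon A\nrightarrow B$ (composition $\odot$ in diagrammatic order, units $1_A$, weakly associative/unital) and cells with horizontal source $J\colon A\nrightarrow B$, horizontal target $K\colon C\nrightarrow D$, vertical sides $f\colon A\to C$, $g\colon B\to D$; horizontal cells are those with identity vertical sides. A cell $\phi\colon J\Rightarrow K$ with sides $f,g$ is cartesian if every cell $H\Rightarrow K$ with sides $f\circ h,g\circ k$ factors uniquely through $\phi$ via a cell $H\Rightarrow J$ with sides $h,k$; opcartesian dually. The companion $f_*\colon A\nrightarrow C$ of $f\colon A\to C$ is the restriction of $1_C$ along $f,\mathrm{id}_C$, given by a cartesian cell $f_*\Rightarrow 1_C$ with sides $f,\mathrm{id}_C$, equivalently by an opcartesian cell $1_A\Rightarrow f_*$ with sides $\mathrm{id}_A,f$. An equipment is a double category with all companions and conjoints. A normal lax double monad $(T,\mu,\iota)$ on $\mathcal K$: a lax double functor $T\colon\mathcal K\to\mathcal K$ preserving vertical composition, identities and horizontal units strictly and horizontal composition up to coherent compositor cells $TJ\odot TH\Rightarrow T(J\odot H)$, with double transformations $\mu\colon T^2\Rightarrow T$, $\iota\colon\mathrm{id}\Rightarrow T$ satisfying the monad axioms; $\iota$ consists of vertical morphisms $\iota_A\colon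 A\to TA$ and cells $\iota_J\colon J\Rightarrow TJ$ with vertical sides $\iota_A,\iota_B$, natural, compatible with compositors, with $\iota_{1_A}=1_{\iota_A}$. Right Beck–Chevalley condition: for $J\colon A\nrightarrow B$ let $\iota_{J*}\colon J\odot\iota_{B*}\Rightarrow\iota_{A*}\odot TJ$ be the horizontal cell obtained as the horizontal composite of the opcartesian cell $1_A\Rightarrow\iota_{A*}$ (sides $\mathrm{id}_A,\iota_A$), the cell $\iota_J$, and the cartesian cell $\iota_{B*}\Rightarrow 1_{TB}$ (sides $\iota_B,\mathrm{id}_{TB}$). We say $\iota_J$ satisfies the right Beck–Chevalley condition if $\iota_{J*}$ is invertible. *)

(* Defs.v *)
Set Implicit Arguments.
Unset Strict Implicit.

(* Vertical composition is written  vcomp g f = g o f  (f : A -> B,    *)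
(* g : B -> C).  Horizontal composition  hcomp J K = J (.) K  is in     *)
(* diagrammatic order.  A cell  cell J K f g  has horizontal source     *)
(* J : A -|-> B, horizontal target K : C -|-> D and vertical sides      *)
(* f : A -> C, g : B -> D.                                             *)
Record DCData := {
  ob : Type;
  ver : ob -> ob -> Type;
  vid : forall A : ob, ver A A;
  vcomp : forall A B C : ob, ver B C -> ver A B -> ver A C;
  hor : ob -> ob -> Type;
  cell : forall A B C D : ob, hor A B -> hor C D -> ver A C -> ver B D -> Type;
  cid : forall (A B : ob) (J : hor A B), cell J J (vid A) (vid B);
  ccomp : forall (A B C D E F : ob) (J : hor A B) (K : hor C D) (L : hor E F)
            (f : ver A C) (g : ver B D) (f' : ver C E) (g' : ver D F),
            cell J K f g -> cell K L f' g' -> cell J L (vcomp f' f) (vcomp g' g);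
  hunit : forall A : ob, hor A A;
  hunit_cell : forall (A C : ob) (f : ver A C), cell (hunit A) (hunit C) f f;
  hcomp : forall A B C : ob, hor A B -> hor B C -> hor A C;
  hcomp_cell : forall (A B C A' B' C' : ob) (J : hor A B) (J' : hor B C)
                 (K : hor A' B') (K' : hor B' C') (f : ver A A') (g : ver B B') (h : ver C C'),
                 cell J K f g -> cell J' K' g h -> cell (hcomp J J') (hcomp K K') f h;
  assoc : forall (A B C D : ob) (J : hor A B) (K : hor B C) (L : hor C D),
            cell (hcomp (hcomp J K) L) (hcomp J (hcomp K L)) (vid A) (vid D);
  assoc_inv : forall (A B C D : ob) (J : hor A B) (K : hor B C) (L : hor C D),
            cell (hcomp J (hcomp K L)) (hcomp (hcomp J K) L) (vid A) (vid D);
  lunit : forall (A B : ob) (J : hor A B), cell (hcomp (hunit A) J) J (vid A) (vid B);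
  lunit_inv : forall (A B : ob) (J : hor A B), cell J (hcomp (hunit A) J) (vid A) (vid B);
  runit : forall (A B : ob) (J : hor A B), cell (hcomp J (hunit B)) J (vid A) (vid B);
  runit_inv : forall (A B : ob) (J : hor A B), cell J (hcomp J (hunit B)) (vid A) (vid B)
}.

Arguments vid {d} A.
Arguments vcomp {d A B C} _ _.
Arguments cell {d A B C D} _ _ _ _.
Arguments cid {d A B} J.
Arguments ccomp {d A B C D E F J K L f g f' g'} _ _.
Arguments hunit {d} A.
Arguments hunit_cell {d A C} f.
Arguments hcomp {d A B C} _ _.
Arguments hcomp_cell {d A B C A' B' C' J J' K K' f g h} _ _.
Arguments assoc {d A B C D} J K L.
Arguments assoc_inv {d A B C D} J K L.
Arguments lunit {d A B} J.
Arguments lunit_inv {d A B} J.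
Arguments runit {d A B} J.
Arguments runit_inv {d A B} J.

Section DoubleCategories.
Context (DC : DCData).
Local Notation O := (ob DC).

Definition ccast (A B C D : O) (J J' : hor A B) (K K' : hor C D)
  (f f' : ver A C) (g g' : ver B D)
  (eJ : J = J') (eK : K = K') (ef : f = f') (eg : g = g') (x : cell J K f g) :
  cell J' K' f' g' :=
  match eJ in _ = J1, eK in _ = K1, ef in _ = f1, eg in _ = g1
        return cell J1 K1 f1 g1 with
  | eq_refl, eq_refl, eq_refl, eq_refl => x
  end.

(* equality of cells (with the same corner objects) once their boundaries,
   which agree propositionally, are identified *)
Definition ceq (A B C D : O) (J J' : hor A B) (K K' : hor C D)
  (f f' : ver A C) (g g' : ver B D) (x : cell J K f g) (y : cell J' K' f' g') : Prop :=
  exists (eJ : J = J') (eK : K = K') (ef : f = f') (eg : g = g'),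
    ccast eJ eK ef eg x = y.

Record DCAxioms : Prop := {
  vcomp_idl : forall (A B : O) (f : ver A B), vcomp (vid B) f = f;
  vcomp_idr : forall (A B : O) (f : ver A B), vcomp f (vid A) = f;
  vcomp_assoc : forall (A B C D : O) (f : ver A B) (g : ver B C) (h : ver C D),
      vcomp h (vcomp g f) = vcomp (vcomp h g) f;
  ccomp_idl : forall (A B C D : O) (J : hor A B) (K : hor C D) (f : ver A C) (g : ver B D)
      (x : cell J K f g), ceq (ccomp (cid J) x) x;
  ccomp_idr : forall (A B C D : O) (J : hor A B) (K : hor C D) (f : ver A C) (g : ver B D)
      (x : cell J K f g), ceq (ccomp x (cid K)) x;
  ccomp_assoc : forall (A1 B1 A2 B2 A3 B3 A4 B4 : O)
      (J1 : hor A1 B1) (J2 : hor A2 B2) (J3 : hor A3 B3) (J4 : hor A4 B4)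
      (f1 : ver A1 A2) (g1 : ver B1 B2) (f2 : ver A2 A3) (g2 : ver B2 B3)
      (f3 : ver A3 A4) (g3 : ver B3 B4)
      (x : cell J1 J2 f1 g1) (y : cell J2 J3 f2 g2) (z : cell J3 J4 f3 g3),
      ceq (ccomp (ccomp x y) z) (ccomp x (ccomp y z));
  hcomp_cid : forall (A B C : O) (J : hor A B) (K : hor B C),
      hcomp_cell (cid J) (cid K) = cid (hcomp J K);
  interchange : forall (A1 B1 C1 A2 B2 C2 A3 B3 C3 : O)
      (J : hor A1 B1) (J' : hor B1 C1) (K : hor A2 B2) (K' : hor B2 C2)
      (L : hor A3 B3) (L' : hor B3 C3)
      (f : ver A1 A2) (g : ver B1 B2) (h : ver C1 C2)
      (f' : ver A2 A3) (g' : ver B2 B3) (h' : ver C2 C3)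
      (x : cell J K f g) (y : cell K L f' g') (x' : cell J' K' g h) (y' : cell K' L' g' h'),
      hcomp_cell (ccomp x y) (ccomp x' y') = ccomp (hcomp_cell x x') (hcomp_cell y y');
  hunit_cell_id : forall A : O, hunit_cell (vid A) = cid (hunit A);
  hunit_cell_comp : forall (A B C : O) (f : ver A B) (g : ver B C),
      hunit_cell (vcomp g f) = ccomp (hunit_cell f) (hunit_cell g);
  assoc_iso1 : forall (A B C D : O) (J : hor A B) (K : hor B C) (L : hor C D),
      ceq (ccomp (assoc J K L) (assoc_inv J K L)) (cid (hcomp (hcomp J K) L));
  assoc_iso2 : forall (A B C D : O) (J : hor A B) (K : hor B C) (L : hor C D),
      ceq (ccomp (assoc_inv J K L) (assoc J K L)) (cid (hcomp J (hcomp K L)));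
  lunit_iso1 : forall (A B : O) (J : hor A B),
      ceq (ccomp (lunit J) (lunit_inv J)) (cid (hcomp (hunit A) J));
  lunit_iso2 : forall (A B : O) (J : hor A B), ceq (ccomp (lunit_inv J) (lunit J)) (cid J);
  runit_iso1 : forall (A B : O) (J : hor A B),
      ceq (ccomp (runit J) (runit_inv J)) (cid (hcomp J (hunit B)));
  runit_iso2 : forall (A B : O) (J : hor A B), ceq (ccomp (runit_inv J) (runit J)) (cid J);
  assoc_nat : forall (A B C E A' B' C' E' : O)
      (J : hor A B) (K : hor B C) (L : hor C E) (J' : hor A' B') (K' : hor B' C') (L' : hor C' E')
      (f : ver A A') (g : ver B B') (h : ver C C') (k : ver E E')
      (x : cell J J' f g) (y : cell K K' g h) (z : cell L L' h k),
      ceq (ccomp (hcomp_cell (hcomp_cell x y) z) (assoc J' K' L'))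
          (ccomp (assoc J K L) (hcomp_cell x (hcomp_cell y z)));
  lunit_nat : forall (A B A' B' : O) (J : hor A B) (J' : hor A' B') (f : ver A A') (g : ver B B')
      (x : cell J J' f g),
      ceq (ccomp (hcomp_cell (hunit_cell f) x) (lunit J')) (ccomp (lunit J) x);
  runit_nat : forall (A B A' B' : O) (J : hor A B) (J' : hor A' B') (f : ver A A') (g : ver B B')
      (x : cell J J' f g),
      ceq (ccomp (hcomp_cell x (hunit_cell g)) (runit J')) (ccomp (runit J) x);
  pentagon : forall (A B C D E : O) (J : hor A B) (K : hor B C) (L : hor C D) (M : hor D E),
      ceq (ccomp (assoc (hcomp J K) L M) (assoc J K (hcomp L M)))
          (ccomp (ccomp (hcomp_cell (assoc J K L) (cid M)) (assoc J (hcomp K L) M))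
                 (hcomp_cell (cid J) (assoc K L M)));
  triangle : forall (A B C : O) (J : hor A B) (K : hor B C),
      ceq (ccomp (assoc J (hunit B) K) (hcomp_cell (cid J) (lunit K)))
          (hcomp_cell (runit J) (cid K))
}.

Definition cartesian (A B C D : O) (J : hor A B) (K : hor C D) (f : ver A C) (g : ver B D)
  (phi : cell J K f g) : Prop :=
  forall (X Y : O) (H : hor X Y) (h : ver X A) (k : ver Y B)
         (psi : cell H K (vcomp f h) (vcomp g k)),
    exists! chi : cell H J h k, ccomp chi phi = psi.

Definition opcartesian (A B C D : O) (J : hor A B) (K : hor C D) (f : ver A C) (g : ver B D)
  (phi : cell J K f g) : Prop :=
  forall (X Y : O) (L : hor X Y) (h : ver C X) (k : ver D Y)
         (psi : cell J L (vcomp h f) (vcomp k g)),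
    exists! chi : cell K L h k, ccomp phi chi = psi.

(* a companion f_* : A -|-> C of f : A -> C: the restriction of 1_C along
   f, id_C (cartesian cell f_* => 1_C), equivalently given by an
   opcartesian cell 1_A => f_* with sides id_A, f *)
Record companion (A C : O) (f : ver A C) := {
  cmp : hor A C;
  cmp_cart : cell cmp (hunit C) f (vid C);
  cmp_opcart : cell (hunit A) cmp (vid A) f;
  cmp_cart_ok : cartesian cmp_cart;
  cmp_opcart_ok : opcartesian cmp_opcart
}.

Record conjoint (A C : O) (f : ver A C) := {
  cnj : hor C A;
  cnj_cart : cell cnj (hunit C) (vid C) f;
  cnj_opcart : cell (hunit A) cnj f (vid A);
  cnj_cart_ok : cartesian cnj_cart;
  cnj_opcart_ok : opcartesian cnj_opcart
}.

Definition hinvertible (A B : O) (J K : hor A B) (x : cell J K (vid A) (vid B)) : Prop :=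
  exists y : cell K J (vid A) (vid B),
    ceq (ccomp x y) (cid J) /\ ceq (ccomp y x) (cid K).

(* a cell whose vertical sides are (propositionally) identities, e.g. built
   from composites of identities, is invertible as a horizontal cell *)
Definition hinvertible_up (A B : O) (J K : hor A B) (f : ver A A) (g : ver B B)
  (x : cell J K f g) : Prop :=
  exists y : cell J K (vid A) (vid B), ceq x y /\ hinvertible y.

Record LaxData := {
  fo : O -> O;
  fv : forall A B : O, ver A B -> ver (fo A) (fo B);
  fh : forall A B : O, hor A B -> hor (fo A) (fo B);
  fc : forall (A B C D : O) (J : hor A B) (K : hor C D) (f : ver A C) (g : ver B D),
         cell J K f g -> cell (fh J) (fh K) (fv f) (fv g);
  fcomp : forall (A B C : O) (J : hor A B) (K : hor B C),
         cell (hcomp (fh J) (fh K)) (fh (hcomp J K)) (vid (fo A)) (vid (fo C))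
}.

Record NormalLax (F : LaxData) : Prop := {
  fv_comp : forall (A B C : O) (f : ver A B) (g : ver B C),
      fv F (vcomp g f) = vcomp (fv F g) (fv F f);
  fv_id : forall A : O, fv F (vid A) = vid (fo F A);
  fc_comp : forall (A B C D E G : O) (J : hor A B) (K : hor C D) (L : hor E G)
      (f : ver A C) (g : ver B D) (f' : ver C E) (g' : ver D G)
      (x : cell J K f g) (y : cell K L f' g'),
      ceq (fc F (ccomp x y)) (ccomp (fc F x) (fc F y));
  fc_id : forall (A B : O) (J : hor A B), ceq (fc F (cid J)) (cid (fh F J));
  fh_unit : forall A : O, fh F (hunit A) = hunit (fo F A);
  fc_unit : forall (A C : O) (f : ver A C), ceq (fc F (hunit_cell f)) (hunit_cell (fv F f));
  fcomp_nat : forall (A B C A' B' C' : O) (J : hor A B) (K : hor B C)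
      (J' : hor A' B') (K' : hor B' C') (f : ver A A') (g : ver B B') (h : ver C C')
      (x : cell J J' f g) (y : cell K K' g h),
      ceq (ccomp (hcomp_cell (fc F x) (fc F y)) (fcomp F J' K'))
          (ccomp (fcomp F J K) (fc F (hcomp_cell x y)));
  fcomp_assoc : forall (A B C D : O) (J : hor A B) (K : hor B C) (L : hor C D),
      ceq (ccomp (ccomp (hcomp_cell (fcomp F J K) (cid (fh F L))) (fcomp F (hcomp J K) L))
                 (fc F (assoc J K L)))
          (ccomp (ccomp (assoc (fh F J) (fh F K) (fh F L))
                        (hcomp_cell (cid (fh F J)) (fcomp F K L)))
                 (fcomp F J (hcomp K L)));
  fcomp_lunit : forall (A B : O) (J : hor A B),
      ceq (ccomp (fcomp F (hunit A) J) (fc F (lunit J))) (lunit (fh F J));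
  fcomp_runit : forall (A B : O) (J : hor A B),
      ceq (ccomp (fcomp F J (hunit B)) (fc F (runit J))) (runit (fh F J))
}.

Record MonadData (T : LaxData) := {
  mu_ob : forall A : O, ver (fo T (fo T A)) (fo T A);
  mu_cell : forall (A B : O) (J : hor A B),
      cell (fh T (fh T J)) (fh T J) (mu_ob A) (mu_ob B);
  iota_ob : forall A : O, ver A (fo T A);
  iota_cell : forall (A B : O) (J : hor A B), cell J (fh T J) (iota_ob A) (iota_ob B)
}.

Record MonadAxioms (T : LaxData) (M : MonadData T) : Prop := {
  mu_natv : forall (A B : O) (f : ver A B),
      vcomp (fv T f) (mu_ob M A) = vcomp (mu_ob M B) (fv T (fv T f));
  mu_natc : forall (A B C D : O) (J : hor A B) (K : hor C D) (f : ver A C) (g : ver B D)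
      (x : cell J K f g),
      ceq (ccomp (fc T (fc T x)) (mu_cell M K)) (ccomp (mu_cell M J) (fc T x));
  mu_comp : forall (A B C : O) (J : hor A B) (K : hor B C),
      ceq (ccomp (hcomp_cell (mu_cell M J) (mu_cell M K)) (fcomp T J K))
          (ccomp (ccomp (fcomp T (fh T J) (fh T K)) (fc T (fcomp T J K)))
                 (mu_cell M (hcomp J K)));
  mu_unit : forall A : O, ceq (mu_cell M (hunit A)) (hunit_cell (mu_ob M A));
  iota_natv : forall (A B : O) (f : ver A B),
      vcomp (fv T f) (iota_ob M A) = vcomp (iota_ob M B) f;
  iota_natc : forall (A B C D : O) (J : hor A B) (K : hor C D) (f : ver A C) (g : ver B D)
      (x : cell J K f g),
      ceq (ccomp x (iota_cell M K)) (ccomp (iota_cell M J) (fc T x));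
  iota_comp : forall (A B C : O) (J : hor A B) (K : hor B C),
      ceq (ccomp (hcomp_cell (iota_cell M J) (iota_cell M K)) (fcomp T J K))
          (ccomp (cid (hcomp J K)) (iota_cell M (hcomp J K)));
  iota_unit : forall A : O, ceq (iota_cell M (hunit A)) (hunit_cell (iota_ob M A));
  mon_assoc_ob : forall A : O,
      vcomp (mu_ob M A) (fv T (mu_ob M A)) = vcomp (mu_ob M A) (mu_ob M (fo T A));
  mon_assoc_cell : forall (A B : O) (J : hor A B),
      ceq (ccomp (fc T (mu_cell M J)) (mu_cell M J))
          (ccomp (mu_cell M (fh T J)) (mu_cell M J));
  mon_lunit_ob : forall A : O, vcomp (mu_ob M A) (fv T (iota_ob M A)) = vid (fo T A);
  mon_lunit_cell : forall (A B : O) (J : hor A B),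
      ceq (ccomp (fc T (iota_cell M J)) (mu_cell M J)) (cid (fh T J));
  mon_runit_ob : forall A : O, vcomp (mu_ob M A) (iota_ob M (fo T A)) = vid (fo T A);
  mon_runit_cell : forall (A B : O) (J : hor A B),
      ceq (ccomp (iota_cell M (fh T J)) (mu_cell M J)) (cid (fh T J))
}.

(* the cell  iota_{J*} : J (.) iota_{B*} => iota_{A*} (.) T J : horizontal
   composite of the opcartesian cell 1_A => iota_{A*}, iota_J and the
   cartesian cell iota_{B*} => 1_{TB}, adjusted by unitors/associator *)
Definition iota_star (T : LaxData) (M : MonadData T) (A B : O) (J : hor A B)
  (cA : companion (iota_ob M A)) (cB : companion (iota_ob M B)) :=
  ccomp (lunit_inv (hcomp J (cmp cB)))
    (ccomp (hcomp_cell (cmp_opcart cA) (hcomp_cell (iota_cell M J) (cmp_cart cB)))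
       (ccomp (assoc_inv (cmp cA) (fh T J) (hunit (fo T B)))
              (runit (hcomp (cmp cA) (fh T J))))).

Definition right_BC (T : LaxData) (M : MonadData T) (A B : O) (J : hor A B)
  (cA : companion (iota_ob M A)) (cB : companion (iota_ob M B)) : Prop :=
  hinvertible_up (iota_star J cA cB).

End DoubleCategories.

Record DoubleCat := { dc_data :> DCData; dc_ax : DCAxioms dc_data }.

Definition equipment (K : DoubleCat) : Prop :=
  (forall (A C : ob K) (f : ver A C), inhabited (companion f)) /\
  (forall (A C : ob K) (f : ver A C), inhabited (conjoint f)).

(* Main.v *)
Require Import Defs.
From Stdlib Require Import ProofIrrelevance ClassicalEpsilon Eqdep.

Section Frame.
Context {DC : DCData}.
Local Notation O := (ob DC).

Definition Pk : Type :=
  { A : O & { B : O & { C : O & { D : O & { J : hor A B & { L : hor C D &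
  { f : ver A C & { g : ver B D & cell J L f g }}}}}}}}.

Definition pk {A B C D : O} {J : hor A B} {L : hor C D} {f : ver A C} {g : ver B D}
  (x : cell J L f g) : Pk :=
  existT _ A (existT _ B (existT _ C (existT _ D (existT _ J (existT _ L
    (existT _ f (existT _ g x))))))).

Definition M := option Pk.
Definition P {A B C D : O} {J : hor A B} {L : hor C D} {f : ver A C} {g : ver B D}
  (x : cell J L f g) : M := Some (pk x).

Lemma Some_inj {T : Type} (a b : T) : Some a = Some b -> a = b.
Proof. intro H; now inversion H. Qed.

Ltac inj H := let H' := fresh in
  match type of H with existT _ ?a _ = existT _ ?b _ =>
    assert (H' : a = b) by exact (f_equal (@projT1 _ _) H); first [subst b | subst a | clear H'];
    apply inj_pair2 in H end.

Lemma pk_inv {A B C D : O} {J J' : hor A B} {L L' : hor C D} {f f' : ver A C} {g g' : ver B D}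
  (x : cell J L f g) (y : cell J' L' f' g') :
  pk x = pk y -> exists (e1 : J = J') (e2 : L = L') (e3 : f = f') (e4 : g = g'),
    ccast e1 e2 e3 e4 x = y.
Proof.
  unfold pk. intro H.
  repeat (apply inj_pair2 in H).
  inj H. inj H. inj H. inj H. subst.
  exists eq_refl, eq_refl, eq_refl, eq_refl. reflexivity.
Qed.

Lemma P_inv {A B C D : O} {J J' : hor A B} {L L' : hor C D} {f f' : ver A C} {g g' : ver B D}
  (x : cell J L f g) (y : cell J' L' f' g') :
  P x = P y -> ceq x y.
Proof. intro H. apply Some_inj in H. now apply pk_inv. Qed.

Lemma ceq_P {A B C D : O} {J J' : hor A B} {L L' : hor C D} {f f' : ver A C} {g g' : ver B D}
  (x : cell J L f g) (y : cell J' L' f' g') :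
  ceq x y -> P x = P y.
Proof. intros [e1 [e2 [e3 [e4 H]]]]. subst. reflexivity. Qed.

Lemma P_inj {A B C D : O} {J : hor A B} {L : hor C D} {f : ver A C} {g : ver B D}
  (x y : cell J L f g) : P x = P y -> x = y.
Proof.
  intro H. destruct (P_inv x y H) as [e1 [e2 [e3 [e4 H']]]].
  rewrite (UIP_refl _ _ e1), (UIP_refl _ _ e2), (UIP_refl _ _ e3), (UIP_refl _ _ e4) in H'.
  exact H'.
Qed.

Lemma P_cast {A B C D : O} {J J' : hor A B} {L L' : hor C D} {f f' : ver A C} {g g' : ver B D}
  (e1 : J = J') (e2 : L = L') (e3 : f = f') (e4 : g = g') (x : cell J L f g) :
  P (ccast e1 e2 e3 e4 x) = P x.
Proof. subst. reflexivity. Qed.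


Ltac peq H := apply Some_inj in H; unfold pk in H; repeat (inj H).

Definition VCR (m n r : M) : Prop :=
  exists (A B C D E F : O) (J : hor A B) (L : hor C D) (N : hor E F)
    (f : ver A C) (g : ver B D) (f' : ver C E) (g' : ver D F)
    (x : cell J L f g) (y : cell L N f' g'), m = P x /\ n = P y /\ r = P (ccomp x y).

Definition HCR (m n r : M) : Prop :=
  exists (A B C A' B' C' : O) (J : hor A B) (J' : hor B C) (L : hor A' B') (L' : hor B' C')
    (f : ver A A') (g : ver B B') (h : ver C C')
    (x : cell J L f g) (y : cell J' L' g h), m = P x /\ n = P y /\ r = P (hcomp_cell x y).

Lemma VCR_fun m n r r' : VCR m n r -> VCR m n r' -> r = r'.
Proof.
  intros (A&B&C&D&E&F&J&L&N&f&g&f'&g'&x&y&H1&H2&H3)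
         (A0&B0&C0&D0&E0&F0&J0&L0&N0&f0&g0&f0'&g0'&x0&y0&H01&H02&H03).
  subst. peq H01. peq H02. subst. reflexivity.
Qed.

Lemma HCR_fun m n r r' : HCR m n r -> HCR m n r' -> r = r'.
Proof.
  intros (A&B&C&D&E&F&J&L&N&N'&f&g&h&x&y&H1&H2&H3)
         (A0&B0&C0&D0&E0&F0&J0&L0&N0&N0'&f0&g0&h0&x0&y0&H01&H02&H03).
  subst. peq H01. peq H02. subst. reflexivity.
Qed.

Definition vc (m n : M) : M :=
  match excluded_middle_informative (exists r, VCR m n r) with
  | left H => proj1_sig (constructive_indefinite_description _ H)
  | right _ => None end.

Definition hc (m n : M) : M :=
  match excluded_middle_informative (exists r, HCR m n r) with
  | left H => proj1_sig (constructive_indefinite_description _ H)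
  | right _ => None end.

Lemma vc_P {A B C D E F : O} {J : hor A B} {L : hor C D} {N : hor E F}
    {f : ver A C} {g : ver B D} {f' : ver C E} {g' : ver D F}
    (x : cell J L f g) (y : cell L N f' g') : vc (P x) (P y) = P (ccomp x y).
Proof.
  unfold vc. destruct excluded_middle_informative as [H|H].
  - destruct constructive_indefinite_description as [r Hr]; simpl.
    apply (VCR_fun _ _ _ _ Hr). do 13 eexists. eauto.
  - exfalso; apply H. eexists. do 13 eexists. eauto.
Qed.

Lemma hc_P {A B C A' B' C' : O} {J : hor A B} {J' : hor B C} {L : hor A' B'} {L' : hor B' C'}
    {f : ver A A'} {g : ver B B'} {h : ver C C'}
    (x : cell J L f g) (y : cell J' L' g h) : hc (P x) (P y) = P (hcomp_cell x y).
Proof.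
  unfold hc. destruct excluded_middle_informative as [H|H].
  - destruct constructive_indefinite_description as [r Hr]; simpl.
    apply (HCR_fun _ _ _ _ Hr). do 15 eexists. eauto.
  - exfalso; apply H. eexists. do 15 eexists. eauto.
Qed.

Lemma vc_inv m n r : vc m n = Some r -> VCR m n (Some r).
Proof.
  unfold vc. destruct excluded_middle_informative as [H|H]; [|discriminate].
  destruct constructive_indefinite_description as [r' Hr]; simpl. intros ->. exact Hr.
Qed.

Lemma hc_inv m n r : hc m n = Some r -> HCR m n (Some r).
Proof.
  unfold hc. destruct excluded_middle_informative as [H|H]; [|discriminate].
  destruct constructive_indefinite_description as [r' Hr]; simpl. intros ->. exact Hr.
Qed.


Lemma vc_assoc_typed (AX : DCAxioms DC) (a b c : M) (r : Pk) :
  vc (vc a b) c = Some r \/ vc a (vc b c) = Some r ->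
  exists (A B C D E F G H : O) (J : hor A B) (L : hor C D) (N : hor E F) (Q : hor G H)
    (f1 : ver A C) (g1 : ver B D) (f2 : ver C E) (g2 : ver D F) (f3 : ver E G) (g3 : ver F H)
    (x : cell J L f1 g1) (y : cell L N f2 g2) (z : cell N Q f3 g3),
    a = P x /\ b = P y /\ c = P z.
Proof.
  intros [E|E].
  - apply vc_inv in E.
    destruct E as (A&B&C&D&E&F&J&L&N&f&g&f'&g'&x&y&H1&H2&H3).
    destruct (vc a b) as [p|] eqn:E1; [|discriminate].
    apply vc_inv in E1.
    destruct E1 as (A0&B0&C0&D0&E0&F0&J0&L0&N0&f0&g0&f0'&g0'&x0&y0&H01&H02&H03).
    rewrite H03 in H1. peq H1. subst.
    do 20 eexists. eauto.
  - apply vc_inv in E.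
    destruct E as (A&B&C&D&E&F&J&L&N&f&g&f'&g'&x&y&H1&H2&H3).
    destruct (vc b c) as [p|] eqn:E1; [|discriminate].
    apply vc_inv in E1.
    destruct E1 as (A0&B0&C0&D0&E0&F0&J0&L0&N0&f0&g0&f0'&g0'&x0&y0&H01&H02&H03).
    rewrite H03 in H2. peq H2. subst.
    do 20 eexists. eauto.
Qed.

Lemma vc_assoc (AX : DCAxioms DC) (a b c : M) : vc (vc a b) c = vc a (vc b c).
Proof.
  destruct (vc (vc a b) c) as [r|] eqn:E1; destruct (vc a (vc b c)) as [r'|] eqn:E2.
  - destruct (vc_assoc_typed AX a b c r (or_introl E1))
      as (A&B&C&D&E&F&G&H&J&L&N&Q&f1&g1&f2&g2&f3&g3&x&y&z&->&->&->).
    rewrite !vc_P in E1. rewrite !vc_P in E2. rewrite <- E1, <- E2.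
    apply ceq_P. apply (ccomp_assoc AX).
  - destruct (vc_assoc_typed AX a b c r (or_introl E1))
      as (A&B&C&D&E&F&G&H&J&L&N&Q&f1&g1&f2&g2&f3&g3&x&y&z&->&->&->).
    rewrite !vc_P in E2. discriminate.
  - destruct (vc_assoc_typed AX a b c r' (or_intror E2))
      as (A&B&C&D&E&F&G&H&J&L&N&Q&f1&g1&f2&g2&f3&g3&x&y&z&->&->&->).
    rewrite !vc_P in E1. discriminate.
  - reflexivity.
Qed.

End Frame.

Arguments P {DC A B C D J L f g} x.
Arguments vc {DC} m n.
Arguments hc {DC} m n.

Section Laws.
Context {DC : DCData} (AX : DCAxioms DC).
Local Notation O := (ob DC).

Definition WT (m : @M DC) {A B C D : O} (J : hor A B) (L : hor C D) (f : ver A C) (g : ver B D) : Prop :=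
  exists x : cell J L f g, m = P x.

Lemma WT_P {A B C D : O} {J : hor A B} {L : hor C D} {f : ver A C} {g : ver B D}
  (x : cell J L f g) : WT (P x) J L f g.
Proof. exists x; reflexivity. Qed.

Lemma WT_vc {A B C D E F : O} {J : hor A B} {L L' : hor C D} {N : hor E F}
    {f : ver A C} {g : ver B D} {f' : ver C E} {g' : ver D F} m n :
  WT m J L f g -> WT n L' N f' g' -> L = L' -> WT (vc m n) J N (vcomp f' f) (vcomp g' g).
Proof. intros [x ->] [y ->] ->. exists (ccomp x y). apply vc_P. Qed.

Lemma WT_hc {A B C A' B' C' : O} {J : hor A B} {J' : hor B C} {L : hor A' B'} {L' : hor B' C'}
    {f : ver A A'} {g g' : ver B B'} {h : ver C C'} m n :
  WT m J L f g -> WT n J' L' g' h -> g = g' -> WT (hc m n) (hcomp J J') (hcomp L L') f h.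
Proof. intros [x ->] [y ->] ->. exists (hcomp_cell x y). apply hc_P. Qed.

Lemma WT_conv {A B C D : O} {J J' : hor A B} {L L' : hor C D} {f f' : ver A C} {g g' : ver B D} m :
  WT m J L f g -> J = J' -> L = L' -> f = f' -> g = g' -> WT m J' L' f' g'.
Proof. intros H -> -> -> ->. exact H. Qed.

Ltac unwt := repeat match goal with H : WT _ _ _ _ _ |- _ => destruct H as [? ->] end.

Lemma vc_idl {A B C D : O} {J : hor A B} {L : hor C D} {f : ver A C} {g : ver B D} m :
  WT m J L f g -> vc (P (cid J)) m = m.
Proof. intros; unwt. rewrite vc_P. apply ceq_P, (ccomp_idl AX). Qed.

Lemma vc_idr {A B C D : O} {J : hor A B} {L : hor C D} {f : ver A C} {g : ver B D} m :
  WT m J L f g -> vc m (P (cid L)) = m.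
Proof. intros; unwt. rewrite vc_P. apply ceq_P, (ccomp_idr AX). Qed.

Lemma interchangeM (A1 B1 C1 A2 B2 C2 A3 B3 C3 : O)
      (J : hor A1 B1) (J' : hor B1 C1) (K : hor A2 B2) (K' : hor B2 C2)
      (L : hor A3 B3) (L' : hor B3 C3)
      (f : ver A1 A2) (g : ver B1 B2) (h : ver C1 C2)
      (f' : ver A2 A3) (g' : ver B2 B3) (h' : ver C2 C3) a b c d :
  WT a J K f g -> WT b K L f' g' -> WT c J' K' g h -> WT d K' L' g' h' ->
  hc (vc a b) (vc c d) = vc (hc a c) (hc b d).
Proof. intros; unwt. rewrite !vc_P, !hc_P, vc_P. f_equal. f_equal. apply (interchange AX). Qed.

Lemma hc_cid {A B C : O} (J : hor A B) (L : hor B C) :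
  hc (P (cid J)) (P (cid L)) = P (cid (hcomp J L)).
Proof. rewrite hc_P, (hcomp_cid AX). reflexivity. Qed.

Lemma u_id (A : O) : P (hunit_cell (vid A)) = P (cid (hunit A)).
Proof. rewrite (hunit_cell_id AX). reflexivity. Qed.

Lemma u_comp {A B C : O} (f : ver A B) (g : ver B C) :
  P (hunit_cell (vcomp g f)) = vc (P (hunit_cell f)) (P (hunit_cell g)).
Proof. rewrite vc_P, (hunit_cell_comp AX). reflexivity. Qed.

Lemma a_iso1 {A B C D : O} (J : hor A B) (K : hor B C) (L : hor C D) :
  vc (P (assoc J K L)) (P (assoc_inv J K L)) = P (cid (hcomp (hcomp J K) L)).
Proof. rewrite vc_P. apply ceq_P, (assoc_iso1 AX). Qed.
Lemma a_iso2 {A B C D : O} (J : hor A B) (K : hor B C) (L : hor C D) :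
  vc (P (assoc_inv J K L)) (P (assoc J K L)) = P (cid (hcomp J (hcomp K L))).
Proof. rewrite vc_P. apply ceq_P, (assoc_iso2 AX). Qed.
Lemma l_iso1 {A B : O} (J : hor A B) :
  vc (P (lunit J)) (P (lunit_inv J)) = P (cid (hcomp (hunit A) J)).
Proof. rewrite vc_P. apply ceq_P, (lunit_iso1 AX). Qed.
Lemma l_iso2 {A B : O} (J : hor A B) : vc (P (lunit_inv J)) (P (lunit J)) = P (cid J).
Proof. rewrite vc_P. apply ceq_P, (lunit_iso2 AX). Qed.
Lemma r_iso1 {A B : O} (J : hor A B) :
  vc (P (runit J)) (P (runit_inv J)) = P (cid (hcomp J (hunit B))).
Proof. rewrite vc_P. apply ceq_P, (runit_iso1 AX). Qed.
Lemma r_iso2 {A B : O} (J : hor A B) : vc (P (runit_inv J)) (P (runit J)) = P (cid J).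
Proof. rewrite vc_P. apply ceq_P, (runit_iso2 AX). Qed.

Lemma a_nat (A B C E A' B' C' E' : O)
      (J : hor A B) (K : hor B C) (L : hor C E) (J' : hor A' B') (K' : hor B' C') (L' : hor C' E')
      (f : ver A A') (g : ver B B') (h : ver C C') (k : ver E E') x y z :
  WT x J J' f g -> WT y K K' g h -> WT z L L' h k ->
  vc (hc (hc x y) z) (P (assoc J' K' L')) = vc (P (assoc J K L)) (hc x (hc y z)).
Proof. intros; unwt. rewrite !hc_P, !vc_P. apply ceq_P, (assoc_nat AX). Qed.

Lemma l_nat (A B A' B' : O) (J : hor A B) (J' : hor A' B') (f : ver A A') (g : ver B B') x :
  WT x J J' f g -> vc (hc (P (hunit_cell f)) x) (P (lunit J')) = vc (P (lunit J)) x.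
Proof. intros; unwt. rewrite !hc_P, !vc_P. apply ceq_P, (lunit_nat AX). Qed.

Lemma r_nat (A B A' B' : O) (J : hor A B) (J' : hor A' B') (f : ver A A') (g : ver B B') x :
  WT x J J' f g -> vc (hc x (P (hunit_cell g))) (P (runit J')) = vc (P (runit J)) x.
Proof. intros; unwt. rewrite !hc_P, !vc_P. apply ceq_P, (runit_nat AX). Qed.

Lemma pentagonM {A B C D E : O} (J : hor A B) (K : hor B C) (L : hor C D) (N : hor D E) :
  vc (P (assoc (hcomp J K) L N)) (P (assoc J K (hcomp L N))) =
  vc (vc (hc (P (assoc J K L)) (P (cid N))) (P (assoc J (hcomp K L) N)))
     (hc (P (cid J)) (P (assoc K L N))).
Proof. rewrite !hc_P, !vc_P. apply ceq_P, (pentagon AX). Qed.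

Lemma triangleM {A B C : O} (J : hor A B) (K : hor B C) :
  vc (P (assoc J (hunit B) K)) (hc (P (cid J)) (P (lunit K))) = hc (P (runit J)) (P (cid K)).
Proof. rewrite !hc_P, !vc_P. apply ceq_P, (triangle AX). Qed.

End Laws.
Arguments WT {DC} m {A B C D} J L f g.

Section FLaws.
Context {DC : DCData} (AX : DCAxioms DC) {T : LaxData DC} (HT : NormalLax T)
        {MD : MonadData T} (HM : MonadAxioms MD).
Local Notation O := (ob DC).

Definition fcM (m : @M DC) : @M DC :=
  match m with
  | None => None
  | Some p => let '(existT _ A (existT _ B (existT _ C (existT _ D (existT _ J (existT _ L
                   (existT _ f (existT _ g x)))))))) := p in P (fc T x)
  end.

Lemma fcM_P {A B C D : O} {J : hor A B} {L : hor C D} {f : ver A C} {g : ver B D}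
  (x : cell J L f g) : fcM (P x) = P (fc T x).
Proof. reflexivity. Qed.

Lemma WT_fc {A B C D : O} {J : hor A B} {L : hor C D} {f : ver A C} {g : ver B D} m :
  WT m J L f g -> WT (fcM m) (fh T J) (fh T L) (fv T f) (fv T g).
Proof. intros [x ->]. exists (fc T x). reflexivity. Qed.

Ltac unwt := repeat match goal with H : WT _ _ _ _ _ |- _ => destruct H as [? ->] end.

Lemma fc_vc {A B C D E G : O} {J : hor A B} {K : hor C D} {L : hor E G}
      {f : ver A C} {g : ver B D} {f' : ver C E} {g' : ver D G} a b :
  WT a J K f g -> WT b K L f' g' -> fcM (vc a b) = vc (fcM a) (fcM b).
Proof. intros; unwt. rewrite !vc_P, !fcM_P, vc_P. apply ceq_P, (fc_comp HT). Qed.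

Lemma fc_cid {A B : O} (J : hor A B) : fcM (P (cid J)) = P (cid (fh T J)).
Proof. apply ceq_P, (fc_id HT). Qed.

Lemma fc_u {A C : O} (f : ver A C) : fcM (P (hunit_cell f)) = P (hunit_cell (fv T f)).
Proof. apply ceq_P, (fc_unit HT). Qed.

Lemma fcomp_natM (A B C A' B' C' : O) (J : hor A B) (K : hor B C)
      (J' : hor A' B') (K' : hor B' C') (f : ver A A') (g : ver B B') (h : ver C C') x y :
  WT x J J' f g -> WT y K K' g h ->
  vc (hc (fcM x) (fcM y)) (P (fcomp T J' K')) = vc (P (fcomp T J K)) (fcM (hc x y)).
Proof. intros; unwt. rewrite !fcM_P, !hc_P, !vc_P, fcM_P, vc_P. apply ceq_P, (fcomp_nat HT). Qed.

Lemma fcomp_lunitM {A B : O} (J : hor A B) :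
  vc (P (fcomp T (hunit A) J)) (fcM (P (lunit J))) = P (lunit (fh T J)).
Proof. rewrite fcM_P, vc_P. apply ceq_P, (fcomp_lunit HT). Qed.

Lemma fcomp_runitM {A B : O} (J : hor A B) :
  vc (P (fcomp T J (hunit B))) (fcM (P (runit J))) = P (runit (fh T J)).
Proof. rewrite fcM_P, vc_P. apply ceq_P, (fcomp_runit HT). Qed.

Lemma iota_natM {A B C D : O} {J : hor A B} {K : hor C D} {f : ver A C} {g : ver B D} x :
  WT x J K f g -> vc x (P (iota_cell MD K)) = vc (P (iota_cell MD J)) (fcM x).
Proof. intros; unwt. rewrite fcM_P, !vc_P. apply ceq_P, (iota_natc HM). Qed.

Lemma iota_unitM (A : O) : P (iota_cell MD (hunit A)) = P (hunit_cell (iota_ob MD A)).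
Proof. apply ceq_P, (iota_unit HM). Qed.

End FLaws.
Arguments fcM {DC} T m.

From Corelib Require Import ssreflect.

Module CohM.

Section Coh.
Context {DC : DCData} (AX : DCAxioms DC).
Local Notation O := (ob DC).
Local Notation "a ;; b" := (vc a b) (at level 50, left associativity).
Local Notation "a ** b" := (hc a b) (at level 40, left associativity).
Local Notation I1 J := (P (cid J)).
Local Notation U := hunit.

Ltac vn := first [ reflexivity |
  (repeat first [rewrite (vcomp_idl AX) | rewrite (vcomp_idr AX)]; reflexivity) ].

Ltac wtn := lazymatch goal with
  | |- WT (vc _ _) _ _ _ _ => eapply WT_vc; [wtn | wtn | vn]
  | |- WT (hc _ _) _ _ _ _ => eapply WT_hc; [wtn | wtn | vn]
  | |- WT (P _) _ _ _ _ => eapply WT_P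
  | |- WT ?m _ _ _ _ => eassumption
  end.
Ltac wt := eapply WT_conv; [wtn | vn | vn | vn | vn].

Tactic Notation "erw" uconstr(t) := unshelve erewrite t; [idtac | try (solve [wt]) ..].
Tactic Notation "erw" "<-" uconstr(t) := unshelve erewrite <- t; [idtac | try (solve [wt]) ..].

Lemma A_ (a b c : @M DC) : a ;; b ;; c = a ;; (b ;; c).
Proof. apply (vc_assoc AX). Qed.

Lemma D_l {A B : O} {J L : hor A B} m :
  WT m J L (vid A) (vid B) -> m = P (lunit_inv J) ;; (I1 (U A) ** m ;; P (lunit L)).
Proof.
  move=> Hm. rewrite -(u_id AX A) (l_nat AX _ _ _ _ _ _ _ _ _ Hm).
  rewrite -A_ (l_iso2 AX) (vc_idl AX _ Hm) //.
Qed.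

Lemma D_r {A B : O} {J L : hor A B} m :
  WT m J L (vid A) (vid B) -> m = P (runit_inv J) ;; (m ** I1 (U B) ;; P (runit L)).
Proof.
  move=> Hm. rewrite -(u_id AX B) (r_nat AX _ _ _ _ _ _ _ _ _ Hm).
  rewrite -A_ (r_iso2 AX) (vc_idl AX _ Hm) //.
Qed.

Lemma RW (a b c r : @M DC) : a ;; b = c -> a ;; (b ;; r) = c ;; r.
Proof. move=> <-. by rewrite A_. Qed.
Lemma RW3 (a b c d r : @M DC) : a ;; b ;; c = d -> a ;; (b ;; (c ;; r)) = d ;; r.
Proof. move=> <-. by rewrite !A_. Qed.

Lemma WL {Z A B : O} (X : hor Z A) {J L N : hor A B} a b :
  WT a J L (vid A) (vid B) -> WT b L N (vid A) (vid B) ->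
  I1 X ** (a ;; b) = (I1 X ** a) ;; (I1 X ** b).
Proof.
  move=> Ha Hb. rewrite -{1}(vc_idl AX (I1 X) (WT_P _)).
  erewrite (interchangeM AX); [reflexivity | wt ..].
Qed.

Lemma WR {A B Z : O} (X : hor B Z) {J L N : hor A B} a b :
  WT a J L (vid A) (vid B) -> WT b L N (vid A) (vid B) ->
  (a ;; b) ** I1 X = (a ** I1 X) ;; (b ** I1 X).
Proof.
  move=> Ha Hb. rewrite -{1}(vc_idl AX (I1 X) (WT_P _)).
  erewrite (interchangeM AX); [reflexivity | wt ..].
Qed.

Lemma WRg {A A1 A2 B Z : O} (X : hor B Z) {J : hor A B} {L : hor A1 B} {N : hor A2 B}
  {f : ver A A1} {f' : ver A1 A2} a b :
  WT a J L f (vid B) -> WT b L N f' (vid B) ->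
  (a ;; b) ** I1 X = (a ** I1 X) ;; (b ** I1 X).
Proof.
  move=> Ha Hb. rewrite -{1}(vc_idl AX (I1 X) (WT_P _)).
  erewrite (interchangeM AX); [reflexivity | wt ..].
Qed.

Lemma cancel_l {A B C D : O} {X : hor A B} {Y : hor C D} {f : ver A C} {g : ver B D} (w w' m n : @M DC) :
  WT m X Y f g -> WT n X Y f g -> w' ;; w = I1 X -> w ;; m = w ;; n -> m = n.
Proof.
  move=> Hm Hn H E.
  by rewrite -(vc_idl AX _ Hm) -(vc_idl AX _ Hn) -H !A_ E.
Qed.

Lemma wcancel_l {A B : O} {J L : hor A B} m n :
  WT m J L (vid A) (vid B) -> WT n J L (vid A) (vid B) -> I1 (U A) ** m = I1 (U A) ** n -> m = n.
Proof. move=> Hm Hn E. by rewrite (D_l _ Hm) (D_l _ Hn) E. Qed.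

Lemma wcancel_r {A B : O} {J L : hor A B} m n :
  WT m J L (vid A) (vid B) -> WT n J L (vid A) (vid B) -> m ** I1 (U B) = n ** I1 (U B) -> m = n.
Proof. move=> Hm Hn E. by rewrite (D_r _ Hm) (D_r _ Hn) E. Qed.

Lemma L2 {A B C : O} (J : hor A B) (K : hor B C) :
  P (assoc (U A) J K) ;; P (lunit (hcomp J K)) = P (lunit J) ** I1 K.
Proof.
  eapply wcancel_l; [wt | wt |].
  eapply (cancel_l (P (assoc (U A) (U A) J) ** I1 K ;; P (assoc (U A) (hcomp (U A) J) K))
                  (P (assoc_inv (U A) (hcomp (U A) J) K) ;; (P (assoc_inv (U A) (U A) J) ** I1 K))).
  { wt. } { wt. }
  { rewrite !A_ (RW _ _ _ _ (eq_sym (WR _ _ _ (WT_P _) (WT_P _)))).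
    by rewrite (a_iso2 AX (U A) (U A) J) (hc_cid AX) (vc_idl AX _ (WT_P _)) (a_iso2 AX (U A) (hcomp (U A) J) K). }
  erewrite WL; [|wt|wt].
  rewrite !A_ (RW3 _ _ _ _ _ (eq_sym (pentagonM AX (U A) (U A) J K))) !A_.
  rewrite (triangleM AX (U A) (hcomp J K)).
  rewrite -(hc_cid AX J K).
  erewrite <- (a_nat AX _ _ _ _ _ _ _ _ (hcomp (U A) (U A)) J K); [|wt|wt|wt].
  rewrite -(triangleM AX (U A) J).
  erewrite WR; [|wt|wt].
  rewrite !A_.
  erewrite (a_nat AX _ _ _ _ _ _ _ _ (U A) (hcomp (U A) J) K); [reflexivity|wt..].
Qed.


Lemma cancel_r {A B C D : O} {X : hor A B} {Y : hor C D} {f : ver A C} {g : ver B D} (w w' m n : @M DC) :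
  WT m X Y f g -> WT n X Y f g -> w ;; w' = I1 Y -> m ;; w = n ;; w -> m = n.
Proof.
  move=> Hm Hn H E.
  by rewrite -(vc_idr AX _ Hm) -(vc_idr AX _ Hn) -H -!A_ E.
Qed.

Lemma L1 (A : O) : P (lunit (U A)) = P (runit (U A)).
Proof.
  have E1 : P (lunit (hcomp (U A) (U A))) = I1 (U A) ** P (lunit (U A)).
  { eapply (cancel_r (P (lunit (U A))) (P (lunit_inv (U A)))); [wt|wt| apply (l_iso1 AX) |].
    rewrite -(u_id AX A). erewrite (l_nat AX); [reflexivity|wt]. }
  eapply wcancel_r; [wt|wt|].
  rewrite -(L2 (U A) (U A)) E1 (triangleM AX (U A) (U A)). reflexivity.
Qed.

Lemma L3 {A B C : O} (J : hor A B) (K : hor B C) :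
  P (assoc J K (U C)) ;; (I1 J ** P (runit K)) = P (runit (hcomp J K)).
Proof.
  eapply wcancel_r; [wt | wt |].
  erewrite WR; [|wt|wt].
  eapply (cancel_r (P (assoc J K (U C))) (P (assoc_inv J K (U C)))); [wt|wt|apply (a_iso1 AX)|].
  rewrite !A_.
  erewrite (a_nat AX _ _ _ _ _ _ _ _ _ _ _ J K (U C)); [|wt..].
  rewrite -(triangleM AX K (U C)).
  erewrite (WL J); [|wt|wt].
  rewrite -!A_ -(pentagonM AX J K (U C) (U C)) !A_.
  erewrite <- (a_nat AX _ _ _ _ _ _ _ _ J K (hcomp (U C) (U C))); [|wt..].
  rewrite (hc_cid AX J K) -A_ (triangleM AX (hcomp J K) (U C)).
  reflexivity.
Qed.


Lemma l_nat_inv {A B A' B' : O} {J : hor A B} {J' : hor A' B'} {f : ver A A'} {g : ver B B'} x :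
  WT x J J' f g -> P (lunit_inv J) ;; (P (hunit_cell f) ** x) = x ;; P (lunit_inv J').
Proof.
  move=> Hx.
  eapply (cancel_r (P (lunit J')) (P (lunit_inv J'))); [wt|wt|apply (l_iso1 AX)|].
  rewrite !A_ (l_nat AX _ _ _ _ _ _ _ _ _ Hx) -A_ (l_iso2 AX) (vc_idl AX _ Hx).
  by rewrite (l_iso2 AX) (vc_idr AX _ Hx).
Qed.

Lemma r_nat_inv {A B A' B' : O} {J : hor A B} {J' : hor A' B'} {f : ver A A'} {g : ver B B'} x :
  WT x J J' f g -> P (runit_inv J) ;; (x ** P (hunit_cell g)) = x ;; P (runit_inv J').
Proof.
  move=> Hx.
  eapply (cancel_r (P (runit J')) (P (runit_inv J'))); [wt|wt|apply (r_iso1 AX)|].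
  rewrite !A_ (r_nat AX _ _ _ _ _ _ _ _ _ Hx) -A_ (r_iso2 AX) (vc_idl AX _ Hx).
  by rewrite (r_iso2 AX) (vc_idr AX _ Hx).
Qed.

Definition CP {A B : O} (F : hor A B) (p : ver A B) (eta eps : @M DC) : Prop :=
  WT eta (U A) F (vid A) p /\ WT eps F (U B) p (vid B) /\
  eta ;; eps = P (hunit_cell p) /\
  P (lunit_inv F) ;; (eta ** eps) ;; P (runit F) = I1 F.

Lemma exist_E1 {A B X Y : O} {R : hor A B} {g : ver A B} (eta eps : @M DC)
  {H : hor X Y} {h : ver X A} {k : ver Y B} psi :
  WT eta (U A) R (vid A) g -> WT eps R (U B) g (vid B) -> eta ;; eps = P (hunit_cell g) ->
  WT psi H (U B) (vcomp g h) k ->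
  P (lunit_inv H) ;; ((P (hunit_cell h) ;; eta) ** psi) ;; P (runit R) ;; eps = psi.
Proof.
  move=> He Hp E1 Hs.
  rewrite A_ -(r_nat AX _ _ _ _ _ _ _ _ _ Hp) !A_.
  erw (RW _ _ _ _ (eq_sym (interchangeM AX _ _ _ _ _ _ _ _ _ _ _ _ _ _ _ _ _ _ _ _ _ (P (hunit_cell h) ;; eta) _ _ _ _ _ _ _))).
  rewrite (A_ (P (hunit_cell h))) E1 (u_id AX B) (vc_idr AX _ Hs) -(u_comp AX) -(L1 B).
  rewrite (l_nat AX _ _ _ _ _ _ _ _ _ Hs) -A_ (l_iso2 AX) (vc_idl AX _ Hs) //.
Qed.


Lemma WT_ex {A B C D : O} {J : hor A B} {L : hor C D} {f : ver A C} {g : ver B D} m :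
  WT m J L f g -> exists x : cell J L f g, m = P x.
Proof. done. Qed.

Lemma CP_of_cart {A B : O} {F : hor A B} {p : ver A B} (eps : cell F (U B) p (vid B)) :
  cartesian eps -> exists eta, CP F p eta (P eps).
Proof.
  move=> Hc.
  have e1 : p = vcomp p (vid A) by rewrite (vcomp_idr AX).
  have e2 : p = vcomp (vid B) p by rewrite (vcomp_idl AX).
  destruct (Hc A A (U A) (vid A) p (ccast eq_refl eq_refl e1 e2 (hunit_cell p))) as [chi [Hchi _]].
  have E1 : P chi ;; P eps = P (hunit_cell p) by rewrite vc_P Hchi P_cast.
  exists (P chi). split; [apply WT_P|]. split; [apply WT_P|]. split; [exact E1|].
  have Hw : WT (P (lunit_inv F) ;; (P chi ** P eps) ;; P (runit F)) F F (vid A) (vid B) by wt.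
  destruct (WT_ex _ Hw) as [w Ew]. rewrite Ew.
  destruct (Hc A B F (vid A) (vid B) (ccomp (cid F) eps)) as [c [_ Hu]].
  have -> : w = cid F.
  { rewrite -(Hu w) ?(Hu (cid F)) //. apply P_inj. rewrite -!vc_P -Ew (vc_idl AX _ (WT_P _)).
    have := exist_E1 (P chi) (P eps) (h := vid A) (H := F) (k := vid B) (P eps) (WT_P _) (WT_P _) E1 ltac:(wt).
    by rewrite (u_id AX) (vc_idl AX _ (WT_P _)). }
  done.
Qed.

Lemma CP_of_opcart {A B : O} {F : hor A B} {p : ver A B} (eta : cell (U A) F (vid A) p) :
  opcartesian eta -> exists eps, CP F p (P eta) eps.
Proof.
  move=> Hc.
  have e1 : p = vcomp p (vid A) by rewrite (vcomp_idr AX).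
  have e2 : p = vcomp (vid B) p by rewrite (vcomp_idl AX).
  destruct (Hc B B (U B) p (vid B) (ccast eq_refl eq_refl e1 e2 (hunit_cell p))) as [chi [Hchi _]].
  have E1 : P eta ;; P chi = P (hunit_cell p) by rewrite vc_P Hchi P_cast.
  exists (P chi). split; [apply WT_P|]. split; [apply WT_P|]. split; [exact E1|].
  have Hw : WT (P (lunit_inv F) ;; (P eta ** P chi) ;; P (runit F)) F F (vid A) (vid B) by wt.
  destruct (WT_ex _ Hw) as [w Ew]. rewrite Ew.
  destruct (Hc A B F (vid A) (vid B) (ccomp eta (cid F))) as [c [_ Hu]].
  have -> : w = cid F.
  { rewrite -(Hu w) ?(Hu (cid F)) //. apply P_inj. rewrite -!vc_P -Ew (vc_idr AX _ (WT_P _)).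
    rewrite !A_ (RW _ _ _ _ (eq_sym (l_nat_inv _ (WT_P eta)))) !A_.
    erw (RW _ _ _ _ (eq_sym (interchangeM AX _ _ _ _ _ _ _ _ _ _ _ _ _ _ _ _ _ _ _ _ _ (P (hunit_cell (vid A))) _ _ _ _ _ _ _))).
    rewrite E1 (u_id AX) (vc_idl AX _ (WT_P _)) (r_nat AX _ _ _ _ _ _ _ _ _ (WT_P _)).
    by rewrite -(L1 A) -A_ (l_iso2 AX) (vc_idl AX _ (WT_P _)). }
  done.
Qed.


Lemma CP_rep {A B X Y : O} {R : hor A B} {g : ver A B} (eta eps : @M DC)
  {H : hor X Y} {h : ver X A} {k : ver Y B} w :
  CP R g eta eps -> WT w H R h k ->
  w = P (lunit_inv H) ;; ((P (hunit_cell h) ;; eta) ** (w ;; eps)) ;; P (runit R).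
Proof.
  move=> [He [Hp [E1 E2]]] Hw.
  erw (interchangeM AX _ _ _ _ _ _ _ _ _ _ _ _ _ _ _ _ _ _ _ _ _ (P (hunit_cell h)) eta w eps).
  rewrite -A_ (l_nat_inv _ Hw) !A_ -(A_ (P (lunit_inv R))) E2 (vc_idr AX _ Hw) //.
Qed.

Lemma CP_faithful {A B X Y : O} {R : hor A B} {g : ver A B} (eta eps : @M DC)
  {H : hor X Y} {h : ver X A} {k : ver Y B} w w' :
  CP R g eta eps -> WT w H R h k -> WT w' H R h k -> w ;; eps = w' ;; eps -> w = w'.
Proof.
  move=> Hc Hw Hw' E. by rewrite (CP_rep _ _ _ Hc Hw) (CP_rep _ _ _ Hc Hw') E.
Qed.

Lemma CP_exists {A B X Y : O} {R : hor A B} {g : ver A B} (eta eps : @M DC)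
  {H : hor X Y} {h : ver X A} {k : ver Y B} psi :
  CP R g eta eps -> WT psi H (U B) (vcomp g h) k ->
  exists w, WT w H R h k /\ w ;; eps = psi.
Proof.
  move=> [He [Hp [E1 E2]]] Hs.
  exists (P (lunit_inv H) ;; ((P (hunit_cell h) ;; eta) ** psi) ;; P (runit R)).
  split; [wt | exact (exist_E1 eta eps psi He Hp E1 Hs)].
Qed.


Lemma a_conj {A B C E A' B' C' E' : O}
      {J : hor A B} {K : hor B C} {L : hor C E} {J' : hor A' B'} {K' : hor B' C'} {L' : hor C' E'}
      {f : ver A A'} {g : ver B B'} {h : ver C C'} {k : ver E E'} x y z :
  WT x J J' f g -> WT y K K' g h -> WT z L L' h k ->
  (x ** y) ** z = P (assoc J K L) ;; (x ** (y ** z)) ;; P (assoc_inv J' K' L').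
Proof.
  move=> Hx Hy Hz.
  rewrite -(a_nat AX _ _ _ _ _ _ _ _ _ _ _ _ _ _ _ _ _ _ _ _ _ Hx Hy Hz) A_ (a_iso1 AX).
  erw (vc_idr AX); done.
Qed.

Lemma a_conj' {A B C E A' B' C' E' : O}
      {J : hor A B} {K : hor B C} {L : hor C E} {J' : hor A' B'} {K' : hor B' C'} {L' : hor C' E'}
      {f : ver A A'} {g : ver B B'} {h : ver C C'} {k : ver E E'} x y z :
  WT x J J' f g -> WT y K K' g h -> WT z L L' h k ->
  x ** (y ** z) = P (assoc_inv J K L) ;; ((x ** y) ** z) ;; P (assoc J' K' L').
Proof.
  move=> Hx Hy Hz.
  rewrite A_ (a_nat AX _ _ _ _ _ _ _ _ _ _ _ _ _ _ _ _ _ _ _ _ _ Hx Hy Hz) -A_ (a_iso2 AX).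
  erw (vc_idl AX); done.
Qed.

Lemma l_conj {A B A' B' : O} {J : hor A B} {J' : hor A' B'} {f : ver A A'} {g : ver B B'} x :
  WT x J J' f g -> P (hunit_cell f) ** x = P (lunit J) ;; x ;; P (lunit_inv J').
Proof.
  move=> Hx. rewrite -(l_nat AX _ _ _ _ _ _ _ _ _ Hx) A_ (l_iso1 AX); erw (vc_idr AX); done.
Qed.

Lemma r_conj {A B A' B' : O} {J : hor A B} {J' : hor A' B'} {f : ver A A'} {g : ver B B'} x :
  WT x J J' f g -> x ** P (hunit_cell g) = P (runit J) ;; x ;; P (runit_inv J').
Proof.
  move=> Hx. rewrite -(r_nat AX _ _ _ _ _ _ _ _ _ Hx) A_ (r_iso1 AX); erw (vc_idr AX); done.
Qed.

Lemma E2' {A B : O} {R : hor A B} {g : ver A B} (eta eps : @M DC) :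
  CP R g eta eps -> eta ** eps = P (lunit R) ;; P (runit_inv R).
Proof.
  move=> [He [Hp [E1 E2]]].
  have Hw : WT (eta ** eps) (hcomp (U A) R) (hcomp R (U B)) (vid A) (vid B) by wt.
  rewrite -(vc_idl AX _ Hw) -(l_iso1 AX) A_ -(vc_idr AX _ Hw) -(r_iso1 AX) ?A_ (RW3 _ _ _ _ _ E2).
  erw (vc_idl AX); done.
Qed.


Tactic Notation "hv" ident(H) uconstr(t) := unshelve epose proof t as H; [try (solve [wt]) .. | idtac].

Lemma hsplit {A B C D E G H1 : O} {J : hor A B} {K : hor C D} {f : ver A C} {g : ver B D}
  {J1 : hor B E} {K1 : hor B E} {L1 : hor D G} {N1 : hor D H1}
  {h : ver E G} {k : ver G H1} e X1 Y X2 :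
  WT e J K f g -> WT X1 J1 K1 (vid B) (vid E) -> WT Y K1 L1 g h -> WT X2 L1 N1 (vid D) k ->
  e ** (X1 ;; (Y ;; X2)) = (I1 J ** X1) ;; ((e ** Y) ;; (I1 K ** X2)).
Proof.
  move=> He H1' Hy H2'.
  rewrite -{1}(vc_idl AX _ He) -{1}(vc_idr AX _ He).
  erw (interchangeM AX _ _ _ _ _ _ _ _ _ _ _ _ _ _ _ _ _ _ _ _ _ (I1 J) (e ;; I1 K) X1 (Y ;; X2) _ _ _ _).
  erw (interchangeM AX _ _ _ _ _ _ _ _ _ _ _ _ _ _ _ _ _ _ _ _ _ e (I1 K) Y X2 _ _ _ _).
  done.
Qed.


Lemma idl_r {A B C D : O} {J : hor A B} {L : hor C D} {f : ver A C} {g : ver B D} m r :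
  WT m J L f g -> I1 J ;; (m ;; r) = m ;; r.
Proof. move=> Hm. by rewrite -A_ (vc_idl AX _ Hm). Qed.

Lemma L2' {A B C : O} (J : hor A B) (K : hor B C) :
  P (assoc_inv (U A) J K) ;; (P (lunit J) ** I1 K) = P (lunit (hcomp J K)).
Proof. rewrite -L2 -A_ (a_iso2 AX). erw (vc_idl AX). done. Qed.

Lemma L3' {A B C : O} (J : hor A B) (K : hor B C) :
  (I1 J ** P (runit_inv K)) ;; P (assoc_inv J K (U C)) = P (runit_inv (hcomp J K)).
Proof.
  eapply (cancel_r (P (runit (hcomp J K))) (P (runit_inv (hcomp J K)))); [wt|wt|apply (r_iso1 AX)|].
  rewrite (r_iso2 AX (hcomp J K)) -(L3 J K) !A_ (RW _ _ _ _ (a_iso2 AX J K (U C))).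
  erw (vc_idl AX (I1 J ** P (runit K))).
  erw <- (WL J). by rewrite (r_iso2 AX K) (hc_cid AX).
Qed.

Lemma Tp {B C : O} (G : hor B C) :
  (P (runit_inv G) ** I1 (U C)) ;; P (assoc G (U C) (U C)) = I1 G ** P (lunit_inv (U C)).
Proof.
  eapply (cancel_r (I1 G ** P (lunit (U C))) (I1 G ** P (lunit_inv (U C)))); [wt|wt| |].
  { erw <- (WL G). by rewrite (l_iso1 AX) (hc_cid AX). }
  rewrite A_ (triangleM AX G (U C)).
  erw <- (WR (U C) (P (runit_inv G))). erw <- (WL G).
  by rewrite (r_iso2 AX) (l_iso2 AX) !(hc_cid AX).
Qed.

Lemma T9 {A B C : O} (F : hor A B) (G : hor B C) :
  (P (runit_inv F) ** I1 G) ;; P (assoc F (U B) G) ;; (I1 F ** P (lunit G)) = I1 (hcomp F G).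
Proof.
  rewrite A_ (triangleM AX F G). erw <- (WR G (P (runit_inv F))).
  by rewrite (r_iso2 AX) (hc_cid AX).
Qed.

Lemma Head {A B : O} (X : hor A B) :
  (P (lunit_inv (U A)) ** I1 X) ;; P (assoc (U A) (U A) X) ;; (I1 (U A) ** P (lunit X)) = I1 (hcomp (U A) X).
Proof.
  rewrite A_ (triangleM AX (U A) X). erw <- (WR X (P (lunit_inv (U A)))).
  by rewrite -(L1 A) (l_iso2 AX) (hc_cid AX).
Qed.

Lemma a_nat_inv {A B C E A' B' C' E' : O}
      {J : hor A B} {K : hor B C} {L : hor C E} {J' : hor A' B'} {K' : hor B' C'} {L' : hor C' E'}
      {f : ver A A'} {g : ver B B'} {h : ver C C'} {k : ver E E'} x y z :
  WT x J J' f g -> WT y K K' g h -> WT z L L' h k ->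
  P (assoc_inv J K L) ;; ((x ** y) ** z) = (x ** (y ** z)) ;; P (assoc_inv J' K' L').
Proof.
  move=> Hx Hy Hz. rewrite (a_conj x y z Hx Hy Hz) -!A_ (a_iso2 AX).
  erw (vc_idl AX). done.
Qed.

Lemma Tail {A B C : O} (F : hor A B) (G : hor B C) :
  (I1 F ** P (runit_inv G)) ;; ((I1 F ** (P (runit_inv G) ** I1 (U C))) ;;
   ((I1 F ** P (assoc G (U C) (U C))) ;;
    (P (assoc_inv F G (hcomp (U C) (U C))) ;; (I1 (hcomp F G) ** P (lunit (U C)))))) =
  P (runit_inv (hcomp F G)).
Proof.
  erw (RW _ _ _ _ (eq_sym (WL F (P (runit_inv G) ** I1 (U C)) (P (assoc G (U C) (U C))) _ _))).
  rewrite (Tp G) -(hc_cid AX F G).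
  erw (a_nat_inv (I1 F) (I1 G) (P (lunit (U C)))).
  rewrite -A_ A_ -(A_ (I1 F ** (I1 G ** P (lunit_inv (U C))))).
  erw <- (WL F (I1 G ** P (lunit_inv (U C))) (I1 G ** P (lunit (U C)))).
  erw <- (WL G (P (lunit_inv (U C))) (P (lunit (U C)))).
  rewrite (l_iso2 AX) !(hc_cid AX). erw (vc_idl AX). by rewrite L3'.
Qed.

Lemma CP_comp_S {A B C : O} {F : hor A B} {G : hor B C} {p : ver A B} {q : ver B C}
  (eta eps th de : @M DC) :
  CP F p eta eps -> CP G q th de ->
  (P (lunit_inv (U A)) ;; (eta ** (P (hunit_cell p) ;; th))) **
  (((eps ;; P (hunit_cell q)) ** de) ;; P (lunit (U C))) =
  P (lunit (hcomp F G)) ;; P (runit_inv (hcomp F G)).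
Proof.
  move=> HF HG. have HF' := HF. have HG' := HG.
  move: HF' HG' => [He [Hp [E1 E2]]] [Ht [Hd [E1' E2q]]].
  transitivity ((P (lunit_inv (U A)) ** I1 (hcomp F G)) ;;
     (((eta ** (P (hunit_cell p) ;; th)) ** ((eps ;; P (hunit_cell q)) ** de)) ;;
      (I1 (hcomp F G) ** P (lunit (U C))))).
  { symmetry.
    erw <- (interchangeM AX _ _ _ _ _ _ _ _ _ _ _ _ _ _ _ _ _ _ _ _ _
       (eta ** (P (hunit_cell p) ;; th)) (I1 (hcomp F G)) ((eps ;; P (hunit_cell q)) ** de) (P (lunit (U C))) _ _ _ _).
    erw (vc_idr AX (eta ** (P (hunit_cell p) ;; th))).
    erw <- (interchangeM AX _ _ _ _ _ _ _ _ _ _ _ _ _ _ _ _ _ _ _ _ _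
       (P (lunit_inv (U A))) (eta ** (P (hunit_cell p) ;; th)) (I1 (hcomp F G))
       ((eps ;; P (hunit_cell q)) ** de ;; P (lunit (U C))) _ _ _ _).
    erw (vc_idl AX ((eps ;; P (hunit_cell q)) ** de ;; P (lunit (U C)))). done. }
  hv St2 (a_conj eta (P (hunit_cell p) ;; th) ((eps ;; P (hunit_cell q)) ** de) He _ _).
  rewrite St2 {St2}.
  hv St3 (a_conj' (P (hunit_cell p) ;; th) (eps ;; P (hunit_cell q)) de _ _ Hd).
  rewrite St3 {St3}.
  have St4 : (P (hunit_cell p) ;; th) ** (eps ;; P (hunit_cell q)) =
             P (lunit F) ;; (eps ;; (th ;; P (runit_inv G))).
  { erw (interchangeM AX _ _ _ _ _ _ _ _ _ _ _ _ _ _ _ _ _ _ _ _ _ (P (hunit_cell p)) th eps (P (hunit_cell q)) _ _ _ _).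
    rewrite (l_conj _ Hp) (r_conj _ Ht) !A_ -(L1 B) (RW _ _ _ _ (l_iso2 AX (U B))).
    erw (vc_idl AX (th ;; P (runit_inv G))). done. }
  rewrite St4 {St4}.
  have St5 : (P (lunit F) ;; (eps ;; (th ;; P (runit_inv G)))) ** de =
     (P (lunit F) ** I1 G) ;; ((eps ** I1 G) ;; ((th ** de) ;; (P (runit_inv G) ** I1 (U C)))).
  { symmetry.
    erw <- (interchangeM AX _ _ _ _ _ _ _ _ _ _ _ _ _ _ _ _ _ _ _ _ _ th (P (runit_inv G)) de (I1 (U C)) _ _ _ _).
    erw (vc_idr AX de).
    erw <- (interchangeM AX _ _ _ _ _ _ _ _ _ _ _ _ _ _ _ _ _ _ _ _ _ eps (th ;; P (runit_inv G)) (I1 G) de _ _ _ _).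
    erw (vc_idl AX de).
    erw <- (interchangeM AX _ _ _ _ _ _ _ _ _ _ _ _ _ _ _ _ _ _ _ _ _ (P (lunit F)) (eps ;; (th ;; P (runit_inv G))) (I1 G) de _ _ _ _).
    erw (vc_idl AX de). done. }
  rewrite St5 {St5} (E2' _ _ HG) !A_.
  rewrite -(A_ (P (assoc_inv (U A) F G))).
  erw (hsplit eta).
  rewrite (L2' F G).
  erw (a_conj' eta eps (I1 G)).
  rewrite (E2' _ _ HF).
  erw (WR G (P (lunit F)) (P (runit_inv F))).
  do 3 erw (WL F).
  rewrite !A_ (RW _ _ _ _ (L2' F G)) (RW3 _ _ _ _ _ (T9 F G)).
  erw (idl_r (J := hcomp F G) (I1 F ** P (runit_inv G))).
  rewrite (RW3 _ _ _ _ _ (Head (hcomp F G))).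
  erw (idl_r (J := hcomp (U A) (hcomp F G)) (P (lunit (hcomp F G)))).
  by rewrite (Tail F G).
Qed.

Lemma CP_comp {A B C : O} {F : hor A B} {G : hor B C} {p : ver A B} {q : ver B C}
  (eta eps th de : @M DC) :
  CP F p eta eps -> CP G q th de ->
  CP (hcomp F G) (vcomp q p)
     (P (lunit_inv (U A)) ;; (eta ** (P (hunit_cell p) ;; th)))
     (((eps ;; P (hunit_cell q)) ** de) ;; P (lunit (U C))).
Proof.
  move=> HF HG. have HF' := HF. have HG' := HG.
  move: HF' HG' => [He [Hp [E1 E2]]] [Ht [Hd [E1' E2q]]].
  split; [wt|]. split; [wt|]. split.
  { rewrite !A_.
    erw (RW _ _ _ _ (eq_sym (interchangeM AX _ _ _ _ _ _ _ _ _ _ _ _ _ _ _ _ _ _ _ _ _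
           eta (eps ;; P (hunit_cell q)) (P (hunit_cell p) ;; th) de _ _ _ _))).
    rewrite -(A_ eta) E1 -(u_comp AX) (A_ (P (hunit_cell p))) E1' -(u_comp AX).
    erw (l_nat AX). rewrite -A_ (l_iso2 AX). erw (vc_idl AX). done. }
  rewrite (CP_comp_S _ _ _ _ HF HG) !A_ (RW _ _ _ _ (l_iso2 AX (hcomp F G))) (r_iso2 AX).
  erw (vc_idl AX (I1 (hcomp F G))). done.
Qed.

End Coh.

End CohM.
Import CohM.

Module MainM.

Section Main.
Context {DC : DCData} (AX : DCAxioms DC) (T : LaxData DC) (HT : NormalLax T)
        (MD : MonadData T) (HM : MonadAxioms MD).
Local Notation O := (ob DC).
Local Notation "a ;; b" := (vc a b) (at level 50, left associativity).
Local Notation "a ** b" := (hc a b) (at level 40, left associativity).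
Local Notation I1 J := (P (cid J)).
Local Notation U := hunit.

Ltac vn := first [ reflexivity |
  (repeat first [rewrite (vcomp_idl AX) | rewrite (vcomp_idr AX) | rewrite (fv_id HT)
                | rewrite (fh_unit HT) | rewrite (iota_natv HM) ]; reflexivity) ].

Ltac wtn := lazymatch goal with
  | |- WT (vc _ _) _ _ _ _ => eapply WT_vc; [wtn | wtn | vn]
  | |- WT (hc _ _) _ _ _ _ => eapply WT_hc; [wtn | wtn | vn]
  | |- WT (fcM _ _) _ _ _ _ => eapply WT_fc; wtn
  | |- WT (P _) _ _ _ _ => eapply WT_P
  | |- WT ?m _ _ _ _ => eassumption
  end.
Ltac wt := eapply WT_conv; [wtn | vn | vn | vn | vn].

Tactic Notation "erw" uconstr(t) := unshelve erewrite t; [idtac | try (solve [wt]) ..].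
Tactic Notation "erw" "<-" uconstr(t) := unshelve erewrite <- t; [idtac | try (solve [wt]) ..].
Tactic Notation "hv" ident(H) uconstr(t) := unshelve epose proof t as H; [try (solve [wt]) .. | idtac].

Lemma A2_ (a b c : @M DC) : a ;; b ;; c = a ;; (b ;; c).
Proof. apply (vc_assoc AX). Qed.

Lemma fcompL {A B : O} (F : hor A B) :
  P (fcomp T (U A) F) = P (lunit (fh T F)) ;; fcM T (P (lunit_inv F)).
Proof.
  rewrite -(fcomp_lunitM HT F) A2_. erw <- (fc_vc HT (P (lunit F)) (P (lunit_inv F))).
  rewrite (l_iso1 AX) (fc_cid HT). erw (vc_idr AX). done.
Qed.

Lemma CP_T {A B : O} {F : hor A B} {p : ver A B} (eta eps : @M DC) :
  CP F p eta eps -> CP (fh T F) (fv T p) (fcM T eta) (fcM T eps).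
Proof.
  move=> [He [Hp [E1 E2]]].
  split; [wt|]. split; [wt|]. split.
  { erw <- (fc_vc HT eta eps). by rewrite E1 (fc_u HT). }
  rewrite -(fcomp_runitM HT F) !A2_.
  erw (RW AX _ _ _ _ (fcomp_natM HT _ _ _ _ _ _ _ _ _ _ _ _ _ eta eps _ _)).
  rewrite (fcompL F) !A2_ (RW AX _ _ _ _ (l_iso2 AX (fh T F))).
  erw (idl_r AX (J := fh T F) (fcM T (P (lunit_inv F)))).
  erw <- (fc_vc HT (eta ** eps) (P (runit F))).
  erw <- (fc_vc HT (P (lunit_inv F)) (eta ** eps ;; P (runit F))).
  by rewrite -A2_ E2 (fc_cid HT).
Qed.


Lemma Cfin (X : O) :
  P (lunit_inv (hcomp (U X) (U X))) ;; (P (assoc_inv (U X) (U X) (U X)) ;;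
    ((P (lunit (U X)) ** I1 (U X)) ;; P (runit (U X)))) = P (lunit (U X)).
Proof.
  rewrite (RW AX _ _ _ _ (L2' AX (U X) (U X))) -A2_ (l_iso2 AX).
  erw (vc_idl AX (P (runit (U X)))). by rewrite (L1 AX).
Qed.

Lemma main_gen {A C : O} (f : ver A C) (cf : companion f)
  (cA : companion (iota_ob MD A)) (cC : companion (iota_ob MD C)) :
  right_BC (cmp cf) cA cC.
Proof.
  destruct (CP_of_cart AX (cmp_cart cf) (cmp_cart_ok cf)) as [etaF HF].
  destruct (CP_of_cart AX (cmp_cart cC) (cmp_cart_ok cC)) as [etaJ HJ].
  destruct (CP_of_opcart AX (cmp_opcart cA) (cmp_opcart_ok cA)) as [epsI HI].
  have HTF := CP_T _ _ HF.
  have RA := CP_comp AX _ _ _ _ HF HJ.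
  have RB := CP_comp AX _ _ _ _ HI HTF.
  have HI' := HI. move: HI' => [HeI [HpI [E1I _]]].
  set X := P (lunit_inv (hcomp (cmp cf) (cmp cC))) ;;
           ((P (cmp_opcart cA) ** (P (iota_cell MD (cmp cf)) ** P (cmp_cart cC))) ;;
            (P (assoc_inv (cmp cA) (fh T (cmp cf)) (U (fo T C))) ;;
             P (runit (hcomp (cmp cA) (fh T (cmp cf)))))).
  have Ex : P (iota_star (cmp cf) cA cC) = X.
  { by rewrite /X !hc_P !vc_P. }
  have C5 : X ;; (((epsI ;; P (hunit_cell (fv T f))) ** fcM T (P (cmp_cart cf))) ;; P (lunit (U (fo T C)))) =
            ((P (cmp_cart cf) ;; P (hunit_cell (iota_ob MD C))) ** P (cmp_cart cC)) ;; P (lunit (U (fo T C))).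
  { rewrite /X !A2_.
    erw <- (r_nat AX _ _ _ _ _ _ _ _
      (((epsI ;; P (hunit_cell (fv T f))) ** fcM T (P (cmp_cart cf))) ;; P (lunit (U (fo T C))))).
    rewrite (fv_id HT) (vcomp_idl AX) (u_id AX (fo T C)).
    erw (WRg AX (U (fo T C)) ((epsI ;; P (hunit_cell (fv T f))) ** fcM T (P (cmp_cart cf)))
                            (P (lunit (U (fo T C))))).
    rewrite !A2_.
    erw (RW AX _ _ _ _ (a_nat_inv AX (epsI ;; P (hunit_cell (fv T f))) (fcM T (P (cmp_cart cf)))
                                  (I1 (U (fo T C))) _ _ _)).
    rewrite !A2_ (fh_unit HT).
    erw (RW AX _ _ _ _ (eq_sym (interchangeM AX _ _ _ _ _ _ _ _ _ _ _ _ _ _ _ _ _ _ _ _ _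
       (P (cmp_opcart cA)) (epsI ;; P (hunit_cell (fv T f)))
       (P (iota_cell MD (cmp cf)) ** P (cmp_cart cC)) (fcM T (P (cmp_cart cf)) ** I1 (U (fo T C))) _ _ _ _))).
    erw <- (interchangeM AX _ _ _ _ _ _ _ _ _ _ _ _ _ _ _ _ _ _ _ _ _
       (P (iota_cell MD (cmp cf))) (fcM T (P (cmp_cart cf))) (P (cmp_cart cC)) (I1 (U (fo T C))) _ _ _ _).
    rewrite -(A2_ (P (cmp_opcart cA))) E1I -(u_comp AX).
    erw <- (iota_natM HM (P (cmp_cart cf))).
    rewrite (iota_unitM HM) (iota_natv HM).
    erw (vc_idr AX (P (cmp_cart cC))).
    erw (RW AX _ _ _ _ (l_nat_inv AX ((P (cmp_cart cf) ;; P (hunit_cell (iota_ob MD C))) ** P (cmp_cart cC)) _)).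
    by rewrite !A2_ (Cfin (fo T C)). }


  have Hk' : WT (((epsI ;; P (hunit_cell (fv T f))) ** fcM T (P (cmp_cart cf))) ;; P (lunit (U (fo T C))))
      (hcomp (cmp cA) (fh T (cmp cf))) (U (fo T C)) (vcomp (vcomp (iota_ob MD C) f) (vid A)) (vid (fo T C)).
  { wt. }
  destruct (CP_exists AX _ _ _ RA Hk') as [y [Hy Ey]].
  have Hx : WT X (hcomp (cmp cf) (cmp cC)) (hcomp (cmp cA) (fh T (cmp cf))) (vid A) (vid (fo T C)).
  { rewrite /X. wt. }
  have Exy : X ;; y = I1 (hcomp (cmp cf) (cmp cC)).
  { eapply (CP_faithful AX _ _ _ _ RA); [wt | wt |].
    rewrite A2_ Ey C5. erw (vc_idl AX (((P (cmp_cart cf) ;; P (hunit_cell (iota_ob MD C))) ** P (cmp_cart cC)) ;; P (lunit (U (fo T C))))).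
    done. }
  have Eyx : y ;; X = I1 (hcomp (cmp cA) (fh T (cmp cf))).
  { eapply (CP_faithful AX _ _ _ _ RB); [wt | wt |].
    rewrite A2_ C5 Ey. erw (vc_idl AX (((epsI ;; P (hunit_cell (fv T f))) ** fcM T (P (cmp_cart cf))) ;; P (lunit (U (fo T C))))).
    done. }
  rewrite /right_BC /hinvertible_up.
  destruct (WT_ex X Hx) as [y0 Ey0].
  destruct (WT_ex y Hy) as [z Ez].
  exists y0. split.
  { apply P_inv. by rewrite Ex Ey0. }
  exists z. split; apply P_inv.
  - by rewrite -vc_P -Ey0 -Ez Exy.
  - by rewrite -vc_P -Ey0 -Ez Eyx.
Qed.


End Main.

End MainM.
Import MainM.

Theorem proposition5p6 (K : DoubleCat) (HK : equipment K)
  (T : LaxData K) (HT : NormalLax T) (M : MonadData T) (HM : MonadAxioms M)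
  (A C : ob K) (f : ver A C) (cf : companion f)
  (cA : companion (iota_ob M A)) (cC : companion (iota_ob M C)) :
  right_BC (cmp cf) cA cC.
Proof.
  exact (main_gen (dc_ax K) T HT M HM f cf cA cC).
Qed.
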